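(* Let $A,B,C$ be distinct letters in an $\alpha$-alphabet $\mathcal A$ and let $x,y,z,t$ be words in the alphabet $\mathcal A\setminus\{A,B,C\}$ such that $xyzt$ is a Gauss word in this alphabet. Then (i) $(\mathcal A,xAByCAzBCt)\simeq_S(\mathcal A,xBAyACzCBt)$ if $(|A|,\tau(|B|),|C|)\in S$; (ii) $(\mathcal A,xAByCAzCBt)\simeq_S(\mathcal A,xBAyACzBCt)$ if $(\tau(|A|),\tau(|B|),|C|)\in S$; (iii) $(\mathcal A,xAByACzCBt)\simeq_S(\mathcal A,xBAyCAzBCt)$ if $(|A|,\tau(|B|),\tau(|C|))\in S$.
   Context: Fix a set $\alpha$ with an involution $\tau$ and an arbitrary subset $S\subset\alpha\times\alpha\times\alpha$. An $\alpha$-alphabet is a set $\mathcal A$ with a map $A\mapsto|A|\in\alpha$. A Gauss word in a finite alphabet is a word in which each letter of the alphabet occurs exactly twice. A nanoword over $\alpha$ is a pair $(\mathcal A,w)$ with $\mathcal A$ a finite $\alpha$-alphabet and $w$ a Gauss word in $\mathcal A$. Nanowords are isomorphic if a bijection of alphabets preserving $|\cdot|$ carries one word letterwise to the other. $S$-homotopy moves ($x,y,z,t$ words in the remaining letters; smaller alphabets carry the restricted projection): (1) $(\mathcal A,xAAy)\mapsto(\mathcal A\setminus\{A\},xy)$; (2) $(\mathcal A,xAByBAz)\mapsto(\mathcal A\setminus\{A,B\},xyz)$ if $|B|=\tau(|A|)$; (3) $(\mathcal A,xAByACzBCt)\mapsto(\mathcal A,xBAyCAzCBt)$ if $A,B,C$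 are distinct and $(|A|,|B|,|C|)\in S$. $S$-homotopy $\simeq_S$ is the equivalence relation generated by isomorphisms, these moves and their inverses. *)

(* Defs.v *)
From mathcomp Require Import all_boot.
From Stdlib Require Import Relations.

Set Implicit Arguments. Unset Strict Implicit. Unset Printing Implicit Defensive.

Unset Implicit Arguments.
Record nanoword (alpha : Type) := Nanoword {
  nw_alph : finType;
  nw_proj : nw_alph -> alpha;
  nw_word : seq nw_alph }.
Arguments nw_alph {alpha}.
Arguments nw_proj {alpha} n _.
Arguments nw_word {alpha}.
Arguments Nanoword {alpha nw_alph}.
Set Implicit Arguments.

Definition gauss_word (T : finType) (w : seq T) : Prop :=
  forall a : T, count_mem a w = 2.

Definition cast_letter (T U : finType) (e : T = U) (c : T) : U :=
  match e in _ = U return U with erefl => c end.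

Section Moves.
Variables (alpha : Type) (tau : alpha -> alpha) (S : alpha -> alpha -> alpha -> Prop).

Definition nw_iso (u v : nanoword alpha) : Prop :=
  exists f : nw_alph u -> nw_alph v, bijective f /\
    (forall a, nw_proj v (f a) = nw_proj u a) /\
    map f (nw_word u) = nw_word v.

(* Move (1), up to isomorphism of the result: (A, xAAy) -> (A \ {A}, xy).
   The smaller alphabet is identified with A \ {A} via an injection f whose
   image is exactly A \ {A}, and which preserves projections. *)
Definition move1 (u v : nanoword alpha) : Prop :=
  exists (A : nw_alph u) (x y : seq (nw_alph v)) (f : nw_alph v -> nw_alph u),
    [/\ [/\ injective f, (forall b, b != A -> exists c, f c = b) & (forall c, f c != A)],
        (forall c, nw_proj u (f c) = nw_proj v c),
        nw_word u = map f x ++ [:: A; A] ++ map f y &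
        nw_word v = x ++ y].

(* Move (2): (A, xAByBAz) -> (A \ {A,B}, xyz) if |B| = tau |A| (A, B distinct). *)
Definition move2 (u v : nanoword alpha) : Prop :=
  exists (A B : nw_alph u) (x y z : seq (nw_alph v)) (f : nw_alph v -> nw_alph u),
    [/\ A != B /\ nw_proj u B = tau (nw_proj u A),
        [/\ injective f, (forall b, b != A -> b != B -> exists c, f c = b)
           & (forall c, f c != A /\ f c != B)],
        (forall c, nw_proj u (f c) = nw_proj v c),
        nw_word u = map f x ++ [:: A; B] ++ map f y ++ [:: B; A] ++ map f z &
        nw_word v = x ++ y ++ z].

(* Move (3): (A, xAByACzBCt) -> (A, xBAyCAzCBt) if A,B,C distinct and
   (|A|,|B|,|C|) in S (same alphabet). *)
Definition move3 (u v : nanoword alpha) : Prop :=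
  exists (e : nw_alph v = nw_alph u) (A B C : nw_alph u) (x y z t : seq (nw_alph u)),
    [/\ [/\ A != B, A != C & B != C], S (nw_proj u A) (nw_proj u B) (nw_proj u C),
        (forall c, nw_proj v c = nw_proj u (cast_letter e c)),
        nw_word u = x ++ [:: A; B] ++ y ++ [:: A; C] ++ z ++ [:: B; C] ++ t &
        map (cast_letter e) (nw_word v) = x ++ [:: B; A] ++ y ++ [:: C; A] ++ z ++ [:: C; B] ++ t].

Definition hstep (u v : nanoword alpha) : Prop :=
  nw_iso u v \/ move1 u v \/ move2 u v \/ move3 u v.

Definition is_nanoword (u : nanoword alpha) : Prop := gauss_word (nw_word u).

Definition hstep_nw (u v : nanoword alpha) : Prop :=
  [/\ is_nanoword u, is_nanoword v & hstep u v].

Definition S_homotopic : relation (nanoword alpha) :=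
  clos_refl_sym_trans _ hstep_nw.

End Moves.

(* Main.v *)
Require Import Defs.
From mathcomp Require Import all_boot zify.
From Stdlib Require Import Relations.
Set Implicit Arguments. Unset Strict Implicit.


Definition inj {L : finType} (c : L) : option (option L) := Some (Some c).
Definition ext {L : finType} {T : Type} (proj : L -> T) (p1 p2 : T) (c : option (option L)) : T :=
  match c with None => p1 | Some None => p2 | Some (Some c) => proj c end.
Definition gsub {L : finType} (b : L) (n : option (option L)) (c : L) :=
  if c == b then n else Some (Some c).

Lemma m2_ins (L : finType) (alpha : Type) (tau : alpha -> alpha) (proj : L -> alpha) p1 p2 (X Y Z : seq L) :
  p2 = tau p1 ->
  move2 tau (Nanoword (ext proj p1 p2) (map inj X ++ [:: None; Some None] ++ map inj Y ++ [:: Some None; None] ++ map inj Z)) (Nanoword proj (X ++ Y ++ Z)).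
Proof.
move=> hp; exists None, (Some None), X, Y, Z, inj; split => //=.
split; [by move=> a b [] | | by move=> c].
by case=> [[c|]|] // _ _; exists c.
Qed.

Lemma m2_rm (L : finType) alpha tau (proj : L -> alpha) p1 p2 (b : L) (n m P Q : option (option L)) X Y Z :
  n != m -> n \in [:: None; Some None] -> m \in [:: None; Some None] ->
  (P = inj b /\ Q = m) \/ (P = m /\ Q = inj b) ->
  ext proj p1 p2 Q = tau (ext proj p1 p2 P) -> ext proj p1 p2 n = proj b ->
  move2 tau (Nanoword (ext proj p1 p2) (map (gsub b n) X ++ [:: P; Q] ++ map (gsub b n) Y ++ [:: Q; P] ++ map (gsub b n) Z)) (Nanoword proj (X ++ Y ++ Z)).
Proof.
move=> hnm hn hm hPQ hpr hnb.
exists P, Q, X, Y, Z, (gsub b n).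
move: hn hm hnm hnb hPQ; rewrite !inE => /orP[]/eqP-> /orP[]/eqP-> //= _ hnb.
all: case => -[hP hQ]; subst P Q; split => //=.
all: try by move=> c; rewrite /gsub; case: eqP => [->|].
all: split=> //.
all: try by move=> c1 c2; rewrite /gsub; have [->|h1] := eqVneq c1 b; have [->|h2] := eqVneq c2 b; rewrite ?eqxx ?(negbTE h1) ?(negbTE h2) //; case.
all: try (match goal with |- forall c : _, _ /\ _ => idtac end;
   move=> c; rewrite /gsub /inj; case: (eqVneq c b) => [_|hcb]; split => //; apply/eqP => -[] e; by rewrite e eqxx in hcb).
all: case=> [[c|]|] h1 h2.
all: try (exists c; rewrite /gsub; case: (eqVneq c b) => [e|hcb]; [subst c; by move: h1 h2; rewrite /inj eqxx ?andbF| by []]).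
all: try (by exists b; rewrite /gsub eqxx).
all: by move: h1 h2; rewrite eqxx ?andbF.
Qed.


Lemma m3_same (T : finType) alpha (S : alpha -> alpha -> alpha -> Prop) (proj : T -> alpha) (P Q R : T) x y z t :
  [/\ P != Q, P != R & Q != R] -> S (proj P) (proj Q) (proj R) ->
  move3 S (Nanoword proj (x ++ [:: P; Q] ++ y ++ [:: P; R] ++ z ++ [:: Q; R] ++ t))
          (Nanoword proj (x ++ [:: Q; P] ++ y ++ [:: R; P] ++ z ++ [:: R; Q] ++ t)).
Proof.
move=> hd hS; exists erefl, P, Q, R, x, y, z, t; split => //=.
by rewrite map_id.
Qed.

Lemma gauss_perm (T : finType) (w w' : seq T) : perm_eq w w' -> gauss_word w' -> gauss_word w.
Proof. by move=> /permP hp hg a; rewrite hp. Qed.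

Lemma gauss_base (T : finType) (A B C : T) (w : seq T) :
  [/\ A != B, A != C & B != C] ->
  (forall c, c \in w -> [/\ c != A, c != B & c != C]) ->
  (forall c, c != A -> c != B -> c != C -> count_mem c w = 2) ->
  gauss_word (w ++ [:: A; A; B; B; C; C]).
Proof.
move=> [hAB hAC hBC] hm hc a; rewrite count_cat /=.
have h0 : forall d, d \in [:: A; B; C] -> count_mem d w = 0.
  move=> d hd; apply/count_memPn; apply/negP => /hm [h1 h2 h3].
  by move: hd; rewrite !inE (negbTE h1) (negbTE h2) (negbTE h3).
have hBA : B != A by rewrite eq_sym.
have hCA : C != A by rewrite eq_sym.
have hCB : C != B by rewrite eq_sym.
have [->|ha] := eqVneq a A.
  by rewrite h0 ?inE ?eqxx // ?(negbTE hAB, negbTE hAC, negbTE hBA, negbTE hCA).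
have [->|hb] := eqVneq a B.
  by rewrite h0 ?inE ?eqxx ?orbT // ?(negbTE hAB, negbTE hBC, negbTE hBA, negbTE hCB).
have [->|hc'] := eqVneq a C.
  by rewrite h0 ?inE ?eqxx ?orbT // ?(negbTE hAC, negbTE hBC, negbTE hCA, negbTE hCB).
by rewrite hc // !(eq_sym _ a) (negbTE ha) (negbTE hb) (negbTE hc').
Qed.

Lemma gauss_ext (L : finType) (w : seq L) :
  gauss_word w -> gauss_word (map inj w ++ [:: None; None; Some None; Some None]).
Proof.
move=> hg; case=> [[c|]|]; rewrite count_cat count_map /=.
- have -> : count (preim inj (pred1 (Some (Some c)))) w = count_mem c w.
    by apply: eq_count => d /=; rewrite /inj.
  by rewrite hg.
- rewrite (@eq_count _ _ pred0) ?count_pred0 //.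
- rewrite (@eq_count _ _ pred0) ?count_pred0 //.
Qed.

Ltac perm_tac := apply/permP => p; rewrite ?map_cat; (repeat (rewrite !count_cat /=)); lia.


Lemma inj_neq (L : finType) (a b : L) : a != b -> inj a != inj b.
Proof. by move=> h; apply/eqP => -[] e; rewrite e eqxx in h. Qed.

Lemma map_gsub (L : finType) (b : L) n (s : seq L) :
  (forall c, c \in s -> c != b) -> map (gsub b n) s = map inj s.
Proof. by move=> h; apply/eq_in_map => c /h hc; rewrite /gsub (negbTE hc). Qed.

Lemma hs_fw alpha tau S (u v : nanoword alpha) :
  hstep_nw tau S u v -> S_homotopic tau S u v.
Proof. exact: rst_step. Qed.
Lemma hs_bw alpha tau S (u v : nanoword alpha) :
  hstep_nw tau S v u -> S_homotopic tau S u v.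
Proof. by move=> h; apply: rst_sym; apply: rst_step. Qed.
Lemma hs_tr alpha tau S (u v w : nanoword alpha) :
  S_homotopic tau S u v -> S_homotopic tau S v w -> S_homotopic tau S u w.
Proof. exact: rst_trans. Qed.


Lemma part1 (alpha : Type) (tau : alpha -> alpha) (Hinv : involutive tau)
  (S : alpha -> alpha -> alpha -> Prop)
  (L : finType) (proj : L -> alpha) (A B C : L)
  (x y z t : seq L) :
  [/\ A != B, A != C & B != C] ->
  (forall c, c \in x ++ y ++ z ++ t -> [/\ c != A, c != B & c != C]) ->
  (forall c, c != A -> c != B -> c != C -> count_mem c (x ++ y ++ z ++ t) = 2) ->
  S (proj A) (tau (proj B)) (proj C) ->
        S_homotopic tau S
          (Nanoword proj (x ++ [:: A; B] ++ y ++ [:: C; A] ++ z ++ [:: B; C] ++ t))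
          (Nanoword proj (x ++ [:: B; A] ++ y ++ [:: A; C] ++ z ++ [:: C; B] ++ t)).
Proof.
move=> hd hm hc hS; case: (hd) => hAB hAC hBC.
have hg0 := gauss_base hd hm hc.
have hg1 := gauss_ext hg0.
pose p' := ext proj (proj B) (tau (proj B)).
have s1 : hstep_nw tau S
   (Nanoword p' (map inj x ++ [:: None; Some None] ++ map inj ([:: A; B] ++ y ++ [:: C; A] ++ z ++ [:: B; C]) ++ [:: Some None; None] ++ map inj t))
   (Nanoword proj (x ++ [:: A; B] ++ y ++ [:: C; A] ++ z ++ [:: B; C] ++ t)).
  split.
  - apply: gauss_perm hg1; perm_tac.
  - apply: gauss_perm hg0; perm_tac.
  - right; right; left.
    have -> : x ++ [:: A; B] ++ y ++ [:: C; A] ++ z ++ [:: B; C] ++ t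
       = x ++ ([:: A; B] ++ y ++ [:: C; A] ++ z ++ [:: B; C]) ++ t by rewrite -!catA.
    exact: m2_ins.
have s2 : hstep_nw tau S
   (Nanoword p' ((map inj x ++ [:: None]) ++ [:: inj A; Some None] ++ (inj B :: map inj y) ++ [:: inj A; inj C] ++ (map inj z ++ [:: inj B]) ++ [:: Some None; inj C] ++ (None :: map inj t)))
   (Nanoword p' (map inj x ++ [:: None; Some None] ++ map inj ([:: A; B] ++ y ++ [:: C; A] ++ z ++ [:: B; C]) ++ [:: Some None; None] ++ map inj t)).
  split.
  - apply: gauss_perm hg1; perm_tac.
  - apply: gauss_perm hg1; perm_tac.
  - right; right; right.
    have -> : map inj x ++ [:: None; Some None] ++ map inj ([:: A; B] ++ y ++ [:: C; A] ++ z ++ [:: B; C]) ++ [:: Some None; None] ++ map inj t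
      = (map inj x ++ [:: None]) ++ [:: Some None; inj A] ++ (inj B :: map inj y) ++ [:: inj C; inj A] ++ (map inj z ++ [:: inj B]) ++ [:: inj C; Some None] ++ (None :: map inj t).
      by rewrite !map_cat -!catA.
    apply: m3_same => //; split => //; exact: inj_neq.
have hxB : forall c, c \in x -> c != B.
  by move=> c hc'; case: (hm c) => //; rewrite mem_cat hc'.
have hyB : forall c, c \in y -> c != B.
  by move=> c hc'; case: (hm c) => //; rewrite !mem_cat hc' ?orbT.
have hzB : forall c, c \in z -> c != B.
  by move=> c hc'; case: (hm c) => //; rewrite !mem_cat hc' ?orbT.
have htB : forall c, c \in t -> c != B.
  by move=> c hc'; case: (hm c) => //; rewrite !mem_cat hc' ?orbT.
have s3 : hstep_nw tau S
   (Nanoword p' ((map inj x ++ [:: None]) ++ [:: inj A; Some None] ++ (inj B :: map inj y) ++ [:: inj A; inj C] ++ (map inj z ++ [:: inj B]) ++ [:: Some None; inj C] ++ (None :: map inj t)))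
   (Nanoword proj (x ++ [:: B; A] ++ y ++ [:: A; C] ++ z ++ [:: C; B] ++ t)).
  split.
  - apply: gauss_perm hg1; perm_tac.
  - apply: gauss_perm hg0; perm_tac.
  - right; right; left.
    have -> : x ++ [:: B; A] ++ y ++ [:: A; C] ++ z ++ [:: C; B] ++ t
       = (x ++ [:: B; A]) ++ (y ++ [:: A; C] ++ z) ++ ([:: C; B] ++ t) by rewrite -!catA.
    have -> : (map inj x ++ [:: None]) ++ [:: inj A; Some None] ++ (inj B :: map inj y) ++ [:: inj A; inj C] ++ (map inj z ++ [:: inj B]) ++ [:: Some None; inj C] ++ (None :: map inj t)
       = map (gsub B None) (x ++ [:: B; A]) ++ [:: Some None; inj B] ++ map (gsub B None) (y ++ [:: A; C] ++ z) ++ [:: inj B; Some None] ++ map (gsub B None) ([:: C; B] ++ t).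
      rewrite !map_cat (map_gsub _ hxB) (map_gsub _ hyB) (map_gsub _ hzB) (map_gsub _ htB) /= /gsub eqxx (negbTE hAB) eq_sym (negbTE hBC) -!catA //.
    apply: (@m2_rm _ _ _ _ _ _ _ None (Some None)) => //.
    + by right.
    + by rewrite /= Hinv.
apply: hs_tr; first exact: hs_bw s1.
apply: hs_tr; first exact: hs_bw s2.
exact: hs_fw s3.
Qed.



Lemma gauss_mem (T : finType) (P Q R : T) x y z t :
  gauss_word (x ++ [:: P; Q] ++ y ++ [:: R; P] ++ z ++ [:: Q; R] ++ t) ->
  forall c, c \in x ++ y ++ z ++ t -> [/\ c != P, c != Q & c != R].
Proof.
move=> hg c; rewrite -has_pred1 has_count => hpos.
have h := hg c; move: hpos h; rewrite !count_cat /= => hpos h.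
by split; apply/negP => /eqP e; subst c; move: hpos h; rewrite ?eqxx /= => hpos h; lia.
Qed.

Lemma gauss_cnt (T : finType) (P Q R : T) x y z t :
  gauss_word (x ++ [:: P; Q] ++ y ++ [:: R; P] ++ z ++ [:: Q; R] ++ t) ->
  forall c, c != P -> c != Q -> c != R -> count_mem c (x ++ y ++ z ++ t) = 2.
Proof.
move=> hg c h1 h2 h3; have := hg c; rewrite !count_cat /=.
rewrite !(eq_sym _ c) (negbTE h1) (negbTE h2) (negbTE h3) /= => h; lia.
Qed.



Lemma part2 (alpha : Type) (tau : alpha -> alpha) (Hinv : involutive tau)
  (S : alpha -> alpha -> alpha -> Prop)
  (L : finType) (proj : L -> alpha) (A B C : L)
  (x y z t : seq L) :
  [/\ A != B, A != C & B != C] ->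
  (forall c, c \in x ++ y ++ z ++ t -> [/\ c != A, c != B & c != C]) ->
  (forall c, c != A -> c != B -> c != C -> count_mem c (x ++ y ++ z ++ t) = 2) ->
      S (tau (proj A)) (tau (proj B)) (proj C) ->
        S_homotopic tau S
          (Nanoword proj (x ++ [:: A; B] ++ y ++ [:: C; A] ++ z ++ [:: C; B] ++ t))
          (Nanoword proj (x ++ [:: B; A] ++ y ++ [:: A; C] ++ z ++ [:: B; C] ++ t)).
Proof.
move=> hd hm hc hS; case: (hd) => hAB hAC hBC.
have hg0 := gauss_base hd hm hc.
have hg1 := gauss_ext hg0.
pose p' := ext proj (tau (proj A)) (proj A).
have s1 : hstep_nw tau S
   (Nanoword p' (map inj (x ++ [:: A; B]) ++ [:: None; Some None] ++ map inj y ++ [:: Some None; None] ++ map inj ([:: C; A] ++ z ++ [:: C; B] ++ t)))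
   (Nanoword proj (x ++ [:: A; B] ++ y ++ [:: C; A] ++ z ++ [:: C; B] ++ t)).
  split.
  - apply: gauss_perm hg1; perm_tac.
  - apply: gauss_perm hg0; perm_tac.
  - right; right; left.
    have -> : x ++ [:: A; B] ++ y ++ [:: C; A] ++ z ++ [:: C; B] ++ t
       = (x ++ [:: A; B]) ++ y ++ ([:: C; A] ++ z ++ [:: C; B] ++ t) by rewrite -!catA.
    apply: m2_ins; by rewrite Hinv.
have hgW2 : gauss_word ((map inj x ++ [:: inj A]) ++ [:: None; inj B] ++ (Some None :: map inj y ++ [:: Some None]) ++ [:: inj C; None] ++ (inj A :: map inj z) ++ [:: inj B; inj C] ++ map inj t).
  apply: gauss_perm hg1; perm_tac.
have s2 := @part1 _ _ Hinv S _ p' _ _ _ _ _ _ _ (And3 (isT : None != inj B) (isT : None != inj C) (inj_neq hBC))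
     (gauss_mem hgW2) (gauss_cnt hgW2) hS.
have hx : forall c, c \in x -> c != A by move=> c hc'; case: (hm c) => //; rewrite mem_cat hc'.
have hy : forall c, c \in y -> c != A by move=> c hc'; case: (hm c) => //; rewrite !mem_cat hc' ?orbT.
have hz : forall c, c \in z -> c != A by move=> c hc'; case: (hm c) => //; rewrite !mem_cat hc' ?orbT.
have ht : forall c, c \in t -> c != A by move=> c hc'; case: (hm c) => //; rewrite !mem_cat hc' ?orbT.
have s3 : hstep_nw tau S
   (Nanoword p' ((map inj x ++ [:: inj A]) ++ [:: None; inj B] ++ (Some None :: map inj y ++ [:: Some None]) ++ [:: inj C; None] ++ (inj A :: map inj z) ++ [:: inj B; inj C] ++ map inj t))
   (Nanoword proj (x ++ [:: B; A] ++ y ++ [:: A; C] ++ z ++ [:: B; C] ++ t)).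
  split.
  - exact: hgW2.
  - apply: gauss_perm hg0; perm_tac.
  - right; right; left.
    have -> : x ++ [:: B; A] ++ y ++ [:: A; C] ++ z ++ [:: B; C] ++ t
       = x ++ ([:: B; A] ++ y ++ [:: A; C]) ++ (z ++ [:: B; C] ++ t) by rewrite -!catA.
    have -> : (map inj x ++ [:: inj A]) ++ [:: None; inj B] ++ (Some None :: map inj y ++ [:: Some None]) ++ [:: inj C; None] ++ (inj A :: map inj z) ++ [:: inj B; inj C] ++ map inj t
       = map (gsub A (Some None)) x ++ [:: inj A; None] ++ map (gsub A (Some None)) ([:: B; A] ++ y ++ [:: A; C]) ++ [:: None; inj A] ++ map (gsub A (Some None)) (z ++ [:: B; C] ++ t).
      rewrite !map_cat (map_gsub _ hx) (map_gsub _ hy) (map_gsub _ hz) (map_gsub _ ht) /= /gsub eqxx !(eq_sym _ A) (negbTE hAB) (negbTE hAC) -!catA //.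
    apply: (@m2_rm _ _ _ _ _ _ _ (Some None) None) => //.
    by left.
apply: hs_tr; first exact: hs_bw s1.
apply: hs_tr; last exact: hs_fw s3.
apply: rst_sym; move: s2; rewrite !map_cat /=; repeat (rewrite -!catA /=); by [].
Qed.



Lemma part3 (alpha : Type) (tau : alpha -> alpha) (Hinv : involutive tau)
  (S : alpha -> alpha -> alpha -> Prop)
  (L : finType) (proj : L -> alpha) (A B C : L)
  (x y z t : seq L) :
  [/\ A != B, A != C & B != C] ->
  (forall c, c \in x ++ y ++ z ++ t -> [/\ c != A, c != B & c != C]) ->
  (forall c, c != A -> c != B -> c != C -> count_mem c (x ++ y ++ z ++ t) = 2) ->
      S (proj A) (tau (proj B)) (tau (proj C)) ->
        S_homotopic tau S
          (Nanoword proj (x ++ [:: A; B] ++ y ++ [:: A; C] ++ z ++ [:: C; B] ++ t))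
          (Nanoword proj (x ++ [:: B; A] ++ y ++ [:: C; A] ++ z ++ [:: B; C] ++ t)).
Proof.
move=> hd hm hc hS; case: (hd) => hAB hAC hBC.
have hg0 := gauss_base hd hm hc.
have hg1 := gauss_ext hg0.
pose p' := ext proj (proj C) (tau (proj C)).
have s1 : hstep_nw tau S
   (Nanoword p' (map inj (x ++ [:: A; B] ++ y) ++ [:: None; Some None] ++ map inj ([:: A; C] ++ z ++ [:: C; B]) ++ [:: Some None; None] ++ map inj t))
   (Nanoword proj (x ++ [:: A; B] ++ y ++ [:: A; C] ++ z ++ [:: C; B] ++ t)).
  split.
  - apply: gauss_perm hg1; perm_tac.
  - apply: gauss_perm hg0; perm_tac.
  - right; right; left.
    have -> : x ++ [:: A; B] ++ y ++ [:: A; C] ++ z ++ [:: C; B] ++ t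
       = (x ++ [:: A; B] ++ y) ++ ([:: A; C] ++ z ++ [:: C; B]) ++ t by rewrite -!catA.
    exact: m2_ins.
have hgW1 : gauss_word (map inj x ++ [:: inj A; inj B] ++ (map inj y ++ [:: None]) ++ [:: Some None; inj A] ++ (inj C :: map inj z ++ [:: inj C]) ++ [:: inj B; Some None] ++ (None :: map inj t)).
  apply: gauss_perm hg1; perm_tac.
have s2 := @part1 _ _ Hinv S _ p' _ _ _ _ _ _ _ (And3 (inj_neq hAB) (isT : inj A != Some None) (isT : inj B != Some None))
     (gauss_mem hgW1) (gauss_cnt hgW1) hS.
have hx : forall c, c \in x -> c != C by move=> c hc'; case: (hm c) => //; rewrite mem_cat hc'.
have hy : forall c, c \in y -> c != C by move=> c hc'; case: (hm c) => //; rewrite !mem_cat hc' ?orbT.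
have hz : forall c, c \in z -> c != C by move=> c hc'; case: (hm c) => //; rewrite !mem_cat hc' ?orbT.
have ht : forall c, c \in t -> c != C by move=> c hc'; case: (hm c) => //; rewrite !mem_cat hc' ?orbT.
have s3 : hstep_nw tau S
   (Nanoword p' (map inj x ++ [:: inj B; inj A] ++ (map inj y ++ [:: None]) ++ [:: inj A; Some None] ++ (inj C :: map inj z ++ [:: inj C]) ++ [:: Some None; inj B] ++ (None :: map inj t)))
   (Nanoword proj (x ++ [:: B; A] ++ y ++ [:: C; A] ++ z ++ [:: B; C] ++ t)).
  split.
  - apply: gauss_perm hg1; perm_tac.
  - apply: gauss_perm hg0; perm_tac.
  - right; right; left.
    have -> : x ++ [:: B; A] ++ y ++ [:: C; A] ++ z ++ [:: B; C] ++ t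
       = (x ++ [:: B; A] ++ y ++ [:: C; A]) ++ z ++ ([:: B; C] ++ t) by rewrite -!catA.
    have -> : map inj x ++ [:: inj B; inj A] ++ (map inj y ++ [:: None]) ++ [:: inj A; Some None] ++ (inj C :: map inj z ++ [:: inj C]) ++ [:: Some None; inj B] ++ (None :: map inj t)
       = map (gsub C None) (x ++ [:: B; A] ++ y ++ [:: C; A]) ++ [:: Some None; inj C] ++ map (gsub C None) z ++ [:: inj C; Some None] ++ map (gsub C None) ([:: B; C] ++ t).
      rewrite !map_cat (map_gsub _ hx) (map_gsub _ hy) (map_gsub _ hz) (map_gsub _ ht) /= /gsub eqxx (negbTE hAC) (negbTE hBC) /=.
      by repeat (rewrite -!catA /=).
    apply: (@m2_rm _ _ _ _ _ _ _ None (Some None)) => //.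
    + by right.
    + by rewrite /= Hinv.
apply: hs_tr; first exact: hs_bw s1.
apply: hs_tr; last exact: hs_fw s3.
move: s2; rewrite !map_cat /=; repeat (rewrite -!catA /=); by [].
Qed.

Unset Implicit Arguments. Set Strict Implicit.

Theorem lemma3p1 (alpha : Type) (tau : alpha -> alpha) (Hinv : involutive tau)
  (S : alpha -> alpha -> alpha -> Prop)
  (L : finType) (proj : L -> alpha) (A B C : L)
  (x y z t : seq L) :
  [/\ A != B, A != C & B != C] ->
  (forall c, c \in x ++ y ++ z ++ t -> [/\ c != A, c != B & c != C]) ->
  (forall c, c != A -> c != B -> c != C -> count_mem c (x ++ y ++ z ++ t) = 2) ->
  [/\ S (proj A) (tau (proj B)) (proj C) ->
        S_homotopic tau S
          (Nanoword proj (x ++ [:: A; B] ++ y ++ [:: C; A] ++ z ++ [:: B; C] ++ t))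
          (Nanoword proj (x ++ [:: B; A] ++ y ++ [:: A; C] ++ z ++ [:: C; B] ++ t)),
      S (tau (proj A)) (tau (proj B)) (proj C) ->
        S_homotopic tau S
          (Nanoword proj (x ++ [:: A; B] ++ y ++ [:: C; A] ++ z ++ [:: C; B] ++ t))
          (Nanoword proj (x ++ [:: B; A] ++ y ++ [:: A; C] ++ z ++ [:: B; C] ++ t))
    & S (proj A) (tau (proj B)) (tau (proj C)) ->
        S_homotopic tau S
          (Nanoword proj (x ++ [:: A; B] ++ y ++ [:: A; C] ++ z ++ [:: C; B] ++ t))
          (Nanoword proj (x ++ [:: B; A] ++ y ++ [:: C; A] ++ z ++ [:: B; C] ++ t))].
Proof.
move=> hd hm hc; split => hS.
- exact: (@part1 _ _ Hinv S _ proj A B C x y z t hd hm hc hS).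
- exact: (@part2 _ _ Hinv S _ proj A B C x y z t hd hm hc hS).
- exact: (@part3 _ _ Hinv S _ proj A B C x y z t hd hm hc hS).
Qed.
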